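(* Let $K \in \mathbb{R}^{m\times n}$ and let $\phi_1,\dots,\phi_m:\mathbb{R}\to(0,\infty)$ be bounded univariate probability densities. Define $f_X:\mathbb{R}^n\to(0,\infty)$ by $f_X(x) = \prod_{i=1}^m \phi_i\big((Kx)_i\big)$ and let $N := \ker(K)$. Then: (a) $\int_{\mathbb{R}^n} f_X(x)\,\mathrm{d}x < \infty$ if and only if $N = \{0\}$; (b) regardless of whether $K$ is injective, $\int_{N^\perp} f_X(x)\,\mathrm{d}x < \infty$, where the integral is with respect to Lebesgue measure on the linear subspace $N^\perp$.
   Context: $N^\perp$ denotes the orthogonal complement of $N$ in $\mathbb{R}^n$ (equivalently, the span of the rows of $K$). *)

(* Defs.v *)
From HB Require Import structures.
From mathcomp Require Import all_boot all_order all_algebra.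
From mathcomp Require Import all_classical all_reals all_analysis.
Set Implicit Arguments. Unset Strict Implicit. Unset Printing Implicit Defensive.
Import Order.TTheory GRing.Theory Num.Theory.
Local Open Scope ring_scope.
Local Open Scope ereal_scope.

(* Vectors of R^n are row vectors 'rV[R]_n; (K x)_i is (K *m x^T) i 0. *)

(* Lebesgue integral over R^n of a (non-negative) extended-real function,
   written out as the iterated one-dimensional Lebesgue integral
   (equal to the integral w.r.t. n-dimensional Lebesgue measure for
   non-negative measurable functions, by Tonelli). *)
Fixpoint lebesgue_int_Rn (R : realType) (n : nat) : ('rV[R]_n -> \bar R) -> \bar R :=
  match n return ('rV[R]_n -> \bar R) -> \bar R with
  | 0 => fun g => g 0%R
  | n'.+1 => fun g =>
      \int[@lebesgue_measure R]_t
        lebesgue_int_Rn (fun x : 'rV[R]_n' => g (row_mx (const_mx t : 'rV[R]_1) x))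
  end.

Definition bounded_pos_density (R : realType) (phi : R -> R) : Prop :=
  [/\ measurable_fun setT phi,
      (forall t, (0 < phi t)%R),
      (exists M : R, forall t, (phi t <= M)%R) &
      \int[@lebesgue_measure R]_t (phi t)%:E = 1].

Definition fX (R : realType) (m n : nat) (K : 'M[R]_(m, n)) (phi : 'I_m -> R -> R)
  (x : 'rV[R]_n) : R :=
  (\prod_(i < m) phi i ((K *m x^T) i 0%R))%R.

(* Lebesgue measure on the subspace N^perp = row space of K, realised through
   an orthonormal basis: the rows of B : 'M_(r, n) form an orthonormal basis of
   the row space of K, and x = y *m B for y in R^r is an isometry R^r -> N^perp. *)
Definition orthonormal_basis_of_rowspace (R : realType) (m n r : nat)
  (K : 'M[R]_(m, n)) (B : 'M[R]_(r, n)) : Prop :=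
  (B *m B^T = 1%:M)%R /\ (B == K)%MS.

(* Main.v *)
Require Import Defs.
From HB Require Import structures.
From mathcomp Require Import all_boot all_order all_algebra.
From mathcomp Require Import all_classical all_reals all_analysis.
From mathcomp Require Import ring lra measurable_realfun.
Import Order.TTheory GRing.Theory Num.Theory.
Local Open Scope ring_scope.
Local Open Scope ereal_scope.
Local Open Scope classical_set_scope.


Section oneD.
Context {R : realType}.
Local Notation mu := (@lebesgue_measure R).

Lemma affine_meas (c d : R) : measurable_fun [set: R] (fun t : R => c * t + d)%R.
Proof. by apply: measurable_realfun.measurable_funD => //; exact: measurable_realfun.measurable_funM. Qed.

Lemma affine_ocitv (c : R) (d : R) (c0 : c != 0%R) (X : set R) : ocitv X ->
  mu X = (`|c|)%:E * mu ((fun t => c * t + d)%R @^-1` X).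
Proof.
case=> -[a b] _ <-.
rewrite lebesgue_measure_itv/=.
have [cp|cn] := ltP 0%R c.
  have -> : ((fun t => c * t + d)%R @^-1` `]a, b]%classic) = `]((a - d) / c)%R, ((b - d) / c)%R]%classic.
    apply/seteqP; split=> t /=; rewrite !in_itv/= ltr_pdivrMr// ler_pdivlMr//;
      by case/andP=> h1 h2; apply/andP; split; lra.
  rewrite lebesgue_measure_itv/= !lte_fin.
  have -> : (((a - d) / c)%R < ((b - d) / c)%R)%R = (a < b)%R by rewrite ltr_pM2r ?invr_gt0// ltrD2r.
  case: ifPn => ab; last by rewrite mule0.
  rewrite -EFinB -EFinM gtr0_norm//; congr EFin; by field; rewrite gt_eqF.
have cn' : (c < 0)%R by rewrite lt_neqAle c0 cn.
have -> : ((fun t => c * t + d)%R @^-1` `]a, b]%classic) = `[((b - d) / c)%R, ((a - d) / c)%R[%classic.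
  apply/seteqP; split=> t /=; rewrite !in_itv/= ler_ndivrMr// ltr_ndivlMr//;
    by case/andP=> h1 h2; apply/andP; split; lra.
rewrite lebesgue_measure_itv/= !lte_fin.
have -> : (((b - d) / c)%R < ((a - d) / c)%R)%R = (a < b)%R by rewrite ltr_nM2r ?invr_lt0// ltrD2r.
case: ifPn => ab; last by rewrite mule0.
rewrite -EFinB -EFinM ltr0_norm//; congr EFin; by field.
Qed.

Lemma push_affine (c d : R) (c0 : c != 0%R) (A : set R) : measurable A ->
  pushforward mu (fun t => c * t + d)%R A = (`|c|^-1%R)%:E * mu A.
Proof.
move=> mA.
have mh := affine_meas c d.
have k0 : (0 <= `|c|)%R by [].
  pose k : {nonneg R} := NngNum k0.
have := @lebesgue_measure_unique R (mscale k (pushforward mu ((fun t => c * t + d)%R : measurableTypeR R -> measurableTypeR R))).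
move=> /(_ mh _ A mA) ->.
- rewrite /mscale /= muleA -EFinM mulVf ?mul1e// normr_eq0//.
- by move=> X ocX; rewrite /mscale/= (@affine_ocitv c d c0 X ocX).
Qed.

Lemma integral_affine (f : R -> \bar R) (c d : R) : measurable_fun setT f ->
  (forall x, 0 <= f x) -> c != 0%R ->
  \int[mu]_t f (c * t + d)%R = (`|c|^-1%R)%:E * \int[mu]_u f u.
Proof.
move=> mf f0 c0.
have mh := affine_meas c d.
pose P := @measure_function_pushforward__canonical__measure_function_Measure _ _
     (measurableTypeR R) (measurableTypeR R) R mu _ mh.
have k0 : (0 <= `|c|^-1)%R by rewrite invr_ge0.
pose k : {nonneg R} := NngNum k0.
transitivity (\int[P]_u f u).
  by rewrite ge0_integral_pushforward// preimage_setT.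
transitivity (\int[mscale k mu]_u f u).
  by apply: eq_measure_integral => A mA _; exact: push_affine.
by rewrite ge0_integral_mscale.
Qed.


Lemma integral_gt0 (f : R -> \bar R) : measurable_fun setT f ->
  (forall t, 0 < f t) -> 0 < \int[mu]_t f t.
Proof.
move=> mf fp.
have f0 : forall t, 0 <= f t by move=> t; exact: ltW.
have I0' : 0 <= \int[mu]_t f t by apply: integral_ge0 => t _; exact: f0.
rewrite lt_neqAle I0' andbT; apply/eqP => I0.
pose E k := [set t | ((k.+1%:R)^-1%R%:E <= `|f t|)].
have mE k : measurable (setT `&` E k).
  by apply: emeasurable_fun_c_infty => //; exact: measurableT_comp.
have E0 k : mu (setT `&` E k) = 0.
  have kp : (0 < (k.+1%:R)^-1 :> R)%R by rewrite invr_gt0.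
  have := @le_integral_abse _ _ _ mu setT measurableT f _ mf kp.
  rewrite (_ : \int[mu]_x `|f x| = \int[mu]_x f x); last by apply: eq_integral => t _; rewrite gee0_abs.
  rewrite -I0 => H; apply/eqP; rewrite eq_le measure_ge0 andbT.
  by rewrite -(@lee_pmul2l _ ((k.+1%:R)^-1%R)%:E) ?mule0 // lte_fin.
have : mu.-negligible (\bigcup_k (setT `&` E k)).
  apply: negligible_bigcup => k; exists (setT `&` E k); split; [exact: mE|exact: E0|by []].
rewrite /negligible => -[N [mN N0 sN]].
have NT : N = setT.
  apply/seteqP; split => // t _; apply: sN.
  have := fp t; case Ef : (f t) => [r| |] // rp.
  - have r0 : (0 < r)%R by rewrite -lte_fin.
    have r0' : (0 <= r^-1)%R by rewrite invr_ge0 ltW.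
    exists (Num.Def.archi_bound (r^-1)) => //; split => //=.
    rewrite /E /= Ef /= lee_fin ger0_norm ?ltW //.
    rewrite -[ltRHS]invrK ltf_pV2 ?posrE ?invr_gt0 //.
    apply: lt_le_trans (archi_boundP r0') _.
    by rewrite ler_nat.
  - by exists 0%N => //; split => //=; rewrite /E /= Ef /= leey.
move: N0; rewrite NT -set_itv_infty_infty lebesgue_measure_itv /=.
by [].
Qed.

End oneD.

Set Implicit Arguments.
Unset Strict Implicit.


Section nice.
Context {R : realType}.
Local Notation mu := (@lebesgue_measure R).
Local Notation RR := (measurableTypeR R).

Fixpoint nice (n : nat) : forall d (X : measurableType d), (X -> 'rV[R]_n -> \bar R) -> Prop :=
  match n with
  | 0 => fun d X h => measurable_fun setT (fun x => h x 0%R)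
  | n'.+1 => fun d X h => @nice n' _ (X * RR)%type (fun xt y => h xt.1 (row_mx (const_mx (xt.2 : R) : 'rV[R]_1) y))
  end.
Arguments nice {n d X}.

Lemma int_Rn_S n (g : 'rV[R]_n.+1 -> \bar R) :
  lebesgue_int_Rn g = \int[mu]_t lebesgue_int_Rn (fun y => g (row_mx (const_mx t : 'rV[R]_1) y)).
Proof. by []. Qed.

Lemma int_Rn_ge0 n (g : 'rV[R]_n -> \bar R) : (forall y, 0 <= g y) -> 0 <= lebesgue_int_Rn g.
Proof.
elim: n g => [|n IH] g g0 /=; first exact: g0.
by apply: integral_ge0 => t _; apply: IH => y; exact: g0.
Qed.

Arguments int_Rn_ge0 {n g}.

Lemma nice_meas n : forall d (X : measurableType d) (h : X -> 'rV[R]_n -> \bar R),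
  nice h -> (forall x y, 0 <= h x y) -> measurable_fun setT (fun x => lebesgue_int_Rn (h x)).
Proof.
elim: n => [|n IH] d X h nh h0 //=.
have := IH _ _ _ nh (fun xt y => h0 _ _).
move=> mF.
exact: (measurable_fun_fubini_tonelli_F (m2 := mu) _ mF (fun xt => int_Rn_ge0 (fun y => h0 _ _))).
Qed.


Lemma nice_ext n d (X : measurableType d) (h h' : X -> 'rV[R]_n -> \bar R) :
  (forall x y, h x y = h' x y) -> nice h -> nice h'.
Proof.
move=> e; have -> // : h = h'.
by apply/funext => x; apply/funext => y; exact: e.
Qed.

Lemma nice_comp n : forall d (X : measurableType d) d' (Y : measurableType d')
  (h : X -> 'rV[R]_n -> \bar R) (f : Y -> X),
  nice h -> measurable_fun setT f -> nice (fun y => h (f y)).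
Proof.
elim: n => [|n IH] d X d' Y h f nh mf /=.
  exact: (measurableT_comp nh mf).
apply: (IH _ _ _ _ _ (fun yt => (f yt.1, yt.2)) nh).
apply/measurable_fun_pairP; split.
  exact: (measurableT_comp mf measurable_fst).
exact: measurable_snd.
Qed.

Lemma nice_int n : forall d (X : measurableType d) (h : X * RR -> 'rV[R]_n -> \bar R),
  nice h -> (forall x y, 0 <= h x y) -> nice (fun x y => \int[mu]_t h (x, t) y).
Proof.
elim: n => [|n IH] d X h nh h0 /=.
  exact: (measurable_fun_fubini_tonelli_F (m2 := mu) _ nh (fun xt => h0 _ _)).
pose sw := fun p : (X * RR) * RR => ((p.1.1, p.2), p.1.2).
have msw : measurable_fun setT sw.
  apply/measurable_fun_pairP; split.
    apply/measurable_fun_pairP; split.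
      exact: (measurableT_comp measurable_fst measurable_fst).
    exact: measurable_snd.
  exact: (measurableT_comp measurable_snd measurable_fst).
have nh' := @nice_comp n _ _ _ _
  (fun (p : (X * RR) * RR) z => h p.1 (row_mx (const_mx (p.2 : R) : 'rV[R]_1) z)) sw nh msw.
exact: (IH _ _ _ nh' (fun _ _ => h0 _ _)).
Qed.

Lemma nice_mul n : forall d (X : measurableType d) (h : X -> 'rV[R]_n -> \bar R) (w : X -> R),
  nice h -> measurable_fun setT w -> nice (fun x y => (w x)%:E * h x y).
Proof.
elim: n => [|n IH] d X h w nh mw /=.
  by apply: emeasurable_funM => //; exact/measurable_EFinP.
exact: (IH _ _ _ (fun xt => w xt.1) nh (measurableT_comp mw measurable_fst)).
Qed.


Lemma mul_row_const m n (K : 'M[R]_(m, 1 + n)) (t : R) (z : 'rV[R]_n) i :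
  ((K *m (row_mx (const_mx t : 'rV[R]_1) z)^T) i 0 = (lsubmx K) i 0 * t + (rsubmx K *m z^T) i 0)%R.
Proof.
rewrite tr_row_mx -[K in (K *m _)](hsubmxK K) mul_row_col mxE; congr (_ + _)%R.
by rewrite mxE big_ord1 !mxE.
Qed.

Lemma nice_prod m (phi : 'I_m -> R -> R) (A : {set 'I_m}) n :
  (forall i, measurable_fun setT (phi i)) ->
  forall d (X : measurableType d) (K : 'M[R]_(m, n)) (b : 'I_m -> X -> R),
  (forall i, measurable_fun setT (b i)) ->
  nice (fun x y => (\prod_(i in A) phi i ((K *m y^T) i 0 + b i x))%:E).
Proof.
move=> mphi; elim: n => [|n IH] d X K b mb /=.
  apply/measurable_EFinP.
  have -> : (fun x => \prod_(i in A) phi i ((K *m (0 : 'rV[R]_0)^T) i 0 + b i x))%R =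
      (fun x => \prod_(i <- enum A) phi i ((K *m (0 : 'rV[R]_0)^T) i 0 + b i x))%R.
    by apply/funext => x; rewrite big_enum.
  apply: measurable_prod => i _.
  apply: measurableT_comp; first exact: mphi.
  by apply: measurable_realfun.measurable_funD => //.
pose b' := fun i (xt : X * RR) => ((lsubmx (K : 'M[R]_(m, 1 + n))) i 0 * xt.2 + b i xt.1)%R.
have mb' : forall i, measurable_fun setT (b' i).
  move=> i; apply: measurable_realfun.measurable_funD.
    apply: measurable_realfun.measurable_funM => //; exact: measurable_snd.
  exact: (measurableT_comp (mb i) measurable_fst).
apply: (nice_ext _ (IH _ _ (rsubmx (K : 'M[R]_(m, 1 + n))) b' mb')).
move=> xt z; congr EFin; apply: eq_bigr => i _; congr (phi i).
by rewrite mul_row_const /b' addrA [X in (X + _)%R]addrC.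
Qed.

End nice.

Section ints.
Context {R : realType}.
Local Notation mu := (@lebesgue_measure R).
Local Notation RR := (measurableTypeR R).

Lemma nice_slice n d (X : measurableType d) (h : X -> 'rV[R]_n.+1 -> \bar R) :
  nice h -> nice (fun (xt : X * RR) z => h xt.1 (row_mx (const_mx (xt.2 : R) : 'rV[R]_1) z)).
Proof. by []. Qed.

Lemma meas_slice n d (X : measurableType d) (h : X -> 'rV[R]_n.+1 -> \bar R) x :
  nice h -> (forall x y, 0 <= h x y) ->
  measurable_fun setT (fun t : RR => lebesgue_int_Rn (fun z => h x (row_mx (const_mx (t : R) : 'rV[R]_1) z))).
Proof.
move=> nh h0.
have := nice_meas (nice_slice nh) (fun _ _ => h0 _ _).
move=> mF; exact: (measurableT_comp mF (pair1_measurable x)).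
Qed.

Lemma int_swap n : forall (h : RR -> 'rV[R]_n -> \bar R), nice h -> (forall t y, 0 <= h t y) ->
  \int[mu]_t lebesgue_int_Rn (h t) = lebesgue_int_Rn (fun y => \int[mu]_t h t y).
Proof.
elim: n => [|n IH] h nh h0 //=.
have mG := nice_meas (nice_slice nh) (fun _ _ => h0 _ _).
transitivity (\int[mu]_s \int[mu]_t lebesgue_int_Rn (fun z => h t (row_mx (const_mx s : 'rV[R]_1) z))).
  exact: (fubini_tonelli (m1 := mu) (m2 := mu) (fun p : RR * RR => lebesgue_int_Rn (fun z => h p.1 (row_mx (const_mx (p.2 : R) : 'rV[R]_1) z))) mG (fun _ => int_Rn_ge0 (fun _ => h0 _ _))).
apply: eq_integral => s _.
apply: IH => [|t y]; last exact: h0.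
have H := (nice_comp (h := (fun (p : RR * RR) z => h p.1 (row_mx (const_mx (p.2 : R) : 'rV[R]_1) z))) (f := fun t : RR => (t, s)) (nice_slice nh) (pair2_measurable s)). exact H.
Qed.


Lemma int_scale n : forall d (X : measurableType d) (h : X -> 'rV[R]_n -> \bar R),
  nice h -> (forall x y, 0 <= h x y) -> forall x (c : R), (0 <= c)%R ->
  lebesgue_int_Rn (fun y => c%:E * h x y) = c%:E * lebesgue_int_Rn (h x).
Proof.
elim: n => [|n IH] d X h nh h0 x c c0 //=.
transitivity (\int[mu]_t (c%:E * lebesgue_int_Rn (fun z => h x (row_mx (const_mx t : 'rV[R]_1) z)))).
  apply: eq_integral => t _.
  exact: (IH _ _ _ (nice_slice nh) (fun _ _ => h0 _ _) (x, t) c c0).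
rewrite ge0_integralZl_EFin //.
- by move=> t _; apply: int_Rn_ge0 => y; exact: h0.
- exact: meas_slice.
Qed.

Lemma int_pos n : forall d (X : measurableType d) (h : X -> 'rV[R]_n -> \bar R),
  nice h -> (forall x y, 0 < h x y) -> forall x, 0 < lebesgue_int_Rn (h x).
Proof.
elim: n => [|n IH] d X h nh h0 x //=.
apply: integral_gt0.
  by apply: meas_slice => // x' y; exact: ltW.
by move=> t; exact: (IH _ _ _ (nice_slice nh) (fun _ _ => h0 _ _) (x, t)).
Qed.

Lemma row_const_add n (a : 'rV[R]_(1 + n)) (t : R) (z : 'rV[R]_n) :
  (row_mx (const_mx t : 'rV[R]_1) z + a = row_mx (const_mx (t + lsubmx a 0 0) : 'rV[R]_1) (z + rsubmx a))%R.
Proof.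
rewrite -{1}[a](hsubmxK a) add_row_mx; congr row_mx.
by apply/rowP => j; rewrite !mxE ord1.
Qed.

Lemma int_shift n : forall d (X : measurableType d) (h : X -> 'rV[R]_n -> \bar R),
  nice h -> (forall x y, 0 <= h x y) -> forall x (a : 'rV[R]_n),
  lebesgue_int_Rn (fun y => h x (y + a)%R) = lebesgue_int_Rn (h x).
Proof.
elim: n => [|n IH] d X h nh h0 x a /=.
  by rewrite (_ : a = 0%R) ?addr0 // ; apply/rowP => -[].
pose al := lsubmx (a : 'rV[R]_(1 + n)) ord0 ord0.
pose G := fun t : R => lebesgue_int_Rn (fun z => h x (row_mx (const_mx t : 'rV[R]_1) z)).
transitivity (\int[mu]_t G (1 * t + al)%R).
  apply: eq_integral => t _; rewrite /G mul1r.
  rewrite -(IH _ _ _ (nice_slice nh) (fun _ _ => h0 _ _) (x, (t + al)%R) (rsubmx (a : 'rV[R]_(1 + n)))).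
  by congr lebesgue_int_Rn; apply/funext => z /=; rewrite row_const_add.
rewrite integral_affine ?oner_eq0 //.
- by rewrite normr1 invr1 mul1e.
- exact: meas_slice.
- by move=> t; apply: int_Rn_ge0 => y; exact: h0.
Qed.

End ints.

Section main.
Context {R : realType}.
Local Notation mu := (@lebesgue_measure R).
Local Notation RR := (measurableTypeR R).
Variable m : nat.
Variable phi : 'I_m -> R -> R.
Hypothesis hphi : forall i, bounded_pos_density (phi i).

Let mphi i : measurable_fun setT (phi i). Proof. by case: (hphi i). Qed.
Let phi_gt0 i t : (0 < phi i t)%R. Proof. by case: (hphi i) => _ H _ _. Qed.
Let phi_ge0 i t : (0 <= phi i t)%R. Proof. exact: ltW. Qed.

Definition FF n (K : 'M[R]_(m, n)) (A : {set 'I_m}) (b : 'I_m -> R) (y : 'rV[R]_n) : \bar R :=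
  (\prod_(i in A) phi i ((K *m y^T) i 0 + b i))%:E.

Lemma FF_ge0 n K A b y : 0 <= @FF n K A b y.
Proof. by rewrite lee_fin; apply: prodr_ge0 => i _. Qed.

Lemma FF_gt0 n K A b y : 0 < @FF n K A b y.
Proof. by rewrite lte_fin; apply: prodr_gt0 => i _. Qed.

Lemma nice_FF n d (X : measurableType d) (K : 'M[R]_(m, n)) A (b : 'I_m -> X -> R) :
  (forall i, measurable_fun setT (b i)) -> nice (fun x y => @FF n K A (b^~ x) y).
Proof. by move=> mb; exact: (nice_prod A mphi K mb). Qed.

Lemma muT : mu setT = +oo.
Proof. by rewrite -set_itv_infty_infty lebesgue_measure_itv. Qed.

Lemma FF_slice n (K : 'M[R]_(m, n.+1)) A b t z :
  FF K A b (row_mx (const_mx t : 'rV[R]_1) z) =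
  FF (rsubmx (K : 'M[R]_(m, 1 + n))) A (fun i => (lsubmx (K : 'M[R]_(m, 1 + n))) i 0 * t + b i)%R z.
Proof.
rewrite /FF; congr EFin; apply: eq_bigr => i _; congr (phi i).
by rewrite mul_row_const addrA [X in (X + _)%R]addrC.
Qed.

Lemma infinite n : forall (K : 'M[R]_(m, n)) A (b : 'I_m -> R) (v : 'rV[R]_n),
  v != 0%R -> (K *m v^T = 0)%R -> lebesgue_int_Rn (FF K A b) = +oo.
Proof.
elim: n => [|n IH] K A b v v0 Kv.
  by move: v0; rewrite (_ : v = 0%R) ?eqxx //; apply/rowP => -[].
pose c := lsubmx (K : 'M[R]_(m, 1 + n)); pose K' := rsubmx (K : 'M[R]_(m, 1 + n)).
pose v00 := lsubmx (v : 'rV[R]_(1 + n)) ord0 ord0; pose v' := rsubmx (v : 'rV[R]_(1 + n)).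
have ev : v = row_mx (const_mx v00 : 'rV[R]_1) v'.
  apply/rowP => j; rewrite mxE; case: splitP => k jk; rewrite !mxE;
    rewrite /v00 ?mxE; congr (v _ _); apply: val_inj; rewrite /= jk //; by case: k {jk} => -[].
have Kvi i : (c i 0 * v00 + (K' *m v'^T) i 0 = 0)%R.
  by rewrite -mul_row_const -ev Kv mxE.
rewrite int_Rn_S.
have [v0z|v0nz] := eqVneq v00 0%R.
  have v'0 : v' != 0%R.
    apply: contra v0 => /eqP v'0; apply/eqP; rewrite ev v'0 v0z.
    by apply/rowP => j; rewrite !mxE; case: splitP => k _; rewrite !mxE.
  have K'v' : (K' *m v'^T = 0)%R.
    by apply/matrixP => i j; rewrite ord1 [RHS]mxE; have := Kvi i; rewrite v0z mulr0 add0r.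
  rewrite (eq_integral (cst +oo)); last first.
    move=> t _; rewrite (_ : (fun z => _) = FF K' A (fun i => (c i 0 * t + b i)%R)); last first.
      by apply/funext => z; rewrite FF_slice.
    exact: (IH _ _ _ v').
  rewrite (integral_cst _ measurableT); transitivity (+oo * mu [set: RR]); first by []. by rewrite muT mulyy.
pose Cst := lebesgue_int_Rn (FF K' A b).
have nG : nice (fun (_ : RR) z => FF K' A b z).
  by apply: (@nice_FF _ _ RR K' A (fun i _ => b i)) => i; exact: measurable_cst.
have Cp : 0 < Cst.
  exact: (int_pos nG (fun _ _ => FF_gt0 _ _ _ _) 0%R).
rewrite (eq_integral (cst Cst)); last first.
  move=> t _; rewrite (_ : (fun z => _) = (fun z => FF K' A b (z + (- (t / v00)) *: v')%R)); last first.
    apply/funext => z; rewrite FF_slice /FF; congr EFin; apply: eq_bigr => i _; congr (phi i).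
    rewrite linearD /= mulmxDr [in RHS]mxE linearZ /= -scalemxAr [X in _ = (_ + X + _)%R]mxE.
    rewrite (_ : (K' *m v'^T) i 0 = - (c i 0 * v00))%R; last first.
      by apply/eqP; rewrite -addr_eq0 addrC; apply/eqP; exact: Kvi.
    by field.
  exact: (int_shift nG (fun _ _ => FF_ge0 _ _ _ _) 0%R).
rewrite (integral_cst _ measurableT); transitivity (Cst * mu [set: RR]); first by [].
by rewrite muT muleC gt0_mulye.
Qed.


Lemma meas_FF n d (X : measurableType d) (K : 'M[R]_(m, n)) A (b : 'I_m -> X -> R) z :
  (forall i, measurable_fun setT (b i)) -> measurable_fun setT (fun x => FF K A (b^~ x) z).
Proof.
move=> mb; apply/measurable_EFinP.
have -> : (fun x => \prod_(i in A) phi i ((K *m z^T) i 0 + b i x))%R =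
    (fun x => \prod_(i <- enum A) phi i ((K *m z^T) i 0 + b i x))%R.
  by apply/funext => x; rewrite big_enum.
apply: measurable_prod => i _.
apply: measurableT_comp; first exact: mphi.
by apply: measurable_realfun.measurable_funD => //.
Qed.

Lemma phi_bound : exists2 M : R, (0 <= M)%R & forall i t, (phi i t <= M)%R.
Proof.
have Hb i : exists M : R, forall t, (phi i t <= M)%R by case: (hphi i).
have Hb0 j : (0 <= sval (cid (Hb j)))%R.
  exact: le_trans (phi_ge0 j 0) (svalP (cid (Hb j)) 0%R).
exists (\sum_i sval (cid (Hb i)))%R; first by apply: sumr_ge0.
move=> i t; apply: le_trans (svalP (cid (Hb i)) t) _.
by rewrite (bigD1 i) //= lerDl; apply: sumr_ge0 => j _.
Qed.

Lemma finite n : forall (K : 'M[R]_(m, n)) (A : {set 'I_m}),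
  (forall y : 'rV[R]_n, (forall i, i \in A -> (K *m y^T) i 0 = 0) -> y = 0)%R ->
  exists2 C : R, (0 <= C)%R & forall b, lebesgue_int_Rn (FF K A b) <= C%:E.
Proof.
have [M M0 HM] := phi_bound.
elim: n => [|n IH] K A inj.
  exists (\prod_(i in A) M)%R; first exact: prodr_ge0.
  move=> b /=; rewrite lee_fin; apply: ler_prod => i _.
  by rewrite phi_ge0 HM.
pose c := lsubmx (K : 'M[R]_(m, 1 + n)); pose K' := rsubmx (K : 'M[R]_(m, 1 + n)).
have [i0 /andP[i0A ci0]|H0] := pickP (fun i => (i \in A) && (c i 0 != 0)%R); last first.
  exfalso.
  have := inj (row_mx (const_mx 1%R : 'rV[R]_1) 0%R).
  have /[swap]/[apply] : forall i, i \in A -> ((K *m (row_mx (const_mx 1 : 'rV[R]_1) (0 : 'rV[R]_n))^T) i 0 = 0)%R.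
    move=> i iA; rewrite mul_row_const.
    have := H0 i; rewrite /= iA /= => /negbFE/eqP ->.
    by rewrite mul0r linear0 mulmx0 mxE add0r.
  move/rowP/(_ ord0); rewrite !mxE; case: splitP => [k _|k] /=; last by [].
  by rewrite !mxE; move/eqP; rewrite oner_eq0.
pose g := (c i0 0)%R.
pose K'' := (K' - g^-1 *: (c *m row i0 K'))%R.
pose A' := A :\ i0.
have K''E (y : 'rV[R]_n) i :
    ((K'' *m y^T) i 0 = (K' *m y^T) i 0 - g^-1 * (c i 0 * (K' *m y^T) i0 0))%R.
  rewrite /K'' mulmxBl -scalemxAl -mulmxA -row_mul.
  set P := (K' *m y^T)%R.
  by rewrite !mxE big_ord1 !mxE.
have inj'' : forall y : 'rV[R]_n, (forall i, i \in A' -> (K'' *m y^T) i 0 = 0)%R -> y = 0%R.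
  move=> y Hy.
  pose tau := (- (K' *m y^T) i0 0 / g)%R.
  have Hall : forall i, i \in A -> ((K *m (row_mx (const_mx tau : 'rV[R]_1) y)^T) i 0 = 0)%R.
    move=> i iA; rewrite mul_row_const -/c -/K'.
    have [->|ii0] := eqVneq i i0.
      by rewrite /tau -/g; field.
    have := Hy i; rewrite /A' in_setD1 ii0 iA K''E => /(_ isT) H.
    by rewrite -H /tau -/g; field.
  have HY : (row_mx (const_mx tau : 'rV[R]_1) y : 'rV[R]_(1 + n)) = 0%R := inj _ Hall.
  by have := congr1 rsubmx HY; rewrite row_mxKr => ->; rewrite linear0.
have [C'' C''0 HC''] := IH K'' A' inj''.
exists (C'' / `|g|)%R; first by rewrite divr_ge0.
move=> b.
have gn0 : (g != 0)%R := ci0.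
pose b1 := fun i (t : RR) => (c i 0 * t + b i)%R.
have mb1 i : measurable_fun setT (b1 i) by exact: affine_meas.
have nh1 : nice (fun (t : RR) z => FF K' A (b1^~ t) z) := nice_FF K' A mb1.
have -> : lebesgue_int_Rn (FF K A b) = \int[mu]_t lebesgue_int_Rn (FF K' A (b1^~ t)).
  rewrite int_Rn_S; apply: eq_integral => t _; congr lebesgue_int_Rn; apply/funext => z.
  by rewrite FF_slice.
rewrite (int_swap nh1 (fun _ _ => FF_ge0 _ _ _ _)).
pose d := fun z : 'rV[R]_n => ((K' *m z^T) i0 0 + b i0)%R.
pose b2 := fun i (u : RR) => (b i + c i 0 * (u - b i0) / g)%R.
have mb2 i : measurable_fun setT (b2 i).
  rewrite (_ : b2 i = fun u => (c i 0 / g * u + (b i - c i 0 * b i0 / g))%R); last first.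
    by apply/funext => u; rewrite /b2; field.
  exact: affine_meas.
pose Hf := fun z (u : RR) => (phi i0 u)%:E * FF K'' A' (b2^~ u) z.
have Hf0 z u : 0 <= Hf z u by apply: mule_ge0; [rewrite lee_fin; exact: phi_ge0|exact: FF_ge0].
have mHf z : measurable_fun setT (Hf z).
  apply: emeasurable_funM; first by apply/measurable_EFinP; exact: mphi.
  exact: meas_FF.
have step1 z : \int[mu]_t FF K' A (b1^~ t) z = (`|g|^-1)%:E * \int[mu]_u Hf z u.
  rewrite -(@integral_affine _ (Hf z) g (d z) (mHf z) (Hf0 z) gn0).
  apply: eq_integral => t _.
  rewrite /Hf /FF -EFinM; congr EFin; rewrite (bigD1 i0) //=; congr (_ * _)%R.
    by congr (phi i0); rewrite /b1 /d /g; ring.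
  rewrite (eq_bigl (fun i => i \in A')); last by move=> i; rewrite /A' in_setD1 andbC.
  apply: eq_bigr => i _; congr (phi i); rewrite K''E /b1 /b2 /d -/g.
  by field.
rewrite (_ : (fun z => _) = (fun z => (`|g|^-1)%:E * \int[mu]_u Hf z u)); last first.
  by apply/funext => z; exact: step1.
have nHf2 : nice (fun (xu : RR * RR) z => Hf z xu.2).
  exact: (nice_mul (h := fun (xu : RR * RR) z => FF K'' A' (fun i => b2 i xu.2) z)
    (w := fun xu : RR * RR => phi i0 xu.2)
    (nice_FF K'' A' (b := fun i (xu : RR * RR) => b2 i xu.2)
       (fun i => measurableT_comp (mb2 i) measurable_snd))
    (measurableT_comp (mphi i0) measurable_snd)).
have nHint : nice (fun (_ : RR) z => \int[mu]_u Hf z u) := nice_int nHf2 (fun _ _ => Hf0 _ _).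
have Hint0 (x : RR) z : 0 <= \int[mu]_u Hf z u by apply: integral_ge0 => u _; exact: Hf0.
have ig0 : (0 <= `|g|^-1)%R by rewrite invr_ge0.
rewrite (int_scale nHint Hint0 (0%R : RR) ig0).
have nHf : nice (fun (u : RR) z => Hf z u) := nice_mul (nice_FF K'' A' mb2) (mphi i0).
rewrite -(int_swap nHf (fun _ _ => Hf0 _ _)).
rewrite [(C'' / _)%R]mulrC EFinM; apply: lee_wpmul2l; first by rewrite lee_fin.
apply: (@le_trans _ _ (\int[mu]_u ((phi i0 u)%:E * C''%:E))).
  apply: ge0_le_integral => //.
  - by move=> u _; apply: int_Rn_ge0 => z; exact: Hf0.
  - exact: (nice_meas nHf (fun _ _ => Hf0 _ _)).
  - apply: emeasurable_funM; last exact: measurable_cst.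
    by apply/measurable_EFinP; exact: mphi.
  - move=> u _.
    have nG : nice (fun (u : RR) z => FF K'' A' (b2^~ u) z) := nice_FF K'' A' mb2.
    rewrite /Hf (int_scale nG (fun _ _ => FF_ge0 _ _ _ _) u (phi_ge0 i0 u)).
    by apply: lee_wpmul2l; [rewrite lee_fin | exact: HC''].
rewrite ge0_integralZr //.
- by have [_ _ _ ->] := hphi i0; rewrite mul1e.
- by apply/measurable_EFinP; exact: mphi.
- by move=> u _; rewrite lee_fin.
Qed.

End main.

Unset Implicit Arguments.
Set Strict Implicit.
Local Close Scope classical_set_scope.

Lemma fX_FF (R : realType) (m n : nat) (K : 'M[R]_(m, n)) (phi : 'I_m -> R -> R) :
  (fun x : 'rV[R]_n => (fX K phi x)%:E) = FF phi K [set: 'I_m] (fun _ => 0%R).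
Proof.
apply/funext => x; rewrite /fX /FF; congr EFin.
rewrite [RHS](eq_bigr (fun i => phi i ((K *m x^T) i 0)))%R; last by move=> i _; rewrite addr0.
by apply: eq_bigl => i; rewrite finset.in_setT.
Qed.

Lemma sumsq_eq0 (R : realType) n (x : 'rV[R]_n) : (x *m x^T = 0)%R -> x = 0%R.
Proof.
move=> /matrixP/(_ ord0 ord0); rewrite !mxE => H.
have H' : forall j, (x ord0 j * x^T j ord0 = 0)%R.
  move=> j; apply: (psumr_eq0P _ H) => // k _.
  by rewrite mxE -expr2 sqr_ge0.
apply/rowP => j; rewrite mxE.
have := H' j; rewrite mxE.
by move/eqP; rewrite mulf_eq0 orbb => /eqP.
Qed.


Theorem proposition2p1 (R : realType) (m n : nat) (K : 'M[R]_(m, n))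
  (phi : 'I_m -> R -> R) (hphi : forall i, bounded_pos_density (phi i)) :
  (lebesgue_int_Rn (fun x : 'rV[R]_n => (fX K phi x)%:E) < +oo
     <-> (forall x : 'rV[R]_n, (K *m x^T = 0)%R -> x = 0%R))
  /\
  (forall (r : nat) (B : 'M[R]_(r, n)), orthonormal_basis_of_rowspace K B ->
     lebesgue_int_Rn (fun y : 'rV[R]_r => (fX K phi (y *m B)%R)%:E) < +oo).
Proof.
have fin : forall p (L : 'M[R]_(m, p)), (forall x : 'rV[R]_p, (L *m x^T = 0)%R -> x = 0%R) ->
    lebesgue_int_Rn (fun x : 'rV[R]_p => (fX L phi x)%:E) < +oo.
  move=> p L inj; rewrite fX_FF.
  have inj' : forall y : 'rV[R]_p,
      (forall i, i \in [set: 'I_m] -> (L *m y^T) i 0 = 0)%R -> y = 0%R.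
    move=> y Hy; apply: inj; apply/matrixP => i j; rewrite ord1 [RHS]mxE.
    exact: Hy.
  have [C _ HC] := finite hphi inj'.
  exact: le_lt_trans (HC _) (ltry _).
split; first split.
- move=> Hlt x Kx; apply/eqP; apply/negPn/negP => xn0.
  move: Hlt; rewrite fX_FF (infinite hphi _ _ xn0 Kx).
  by rewrite ltxx.
- exact: fin.
move=> r B [BB KB].
rewrite (_ : (fun y : 'rV[R]_r => (fX K phi (y *m B)%R)%:E) =
   (fun y => (fX (K *m B^T)%R phi y)%:E)); last first.
  by apply/funext => y; rewrite /fX; congr EFin; apply: eq_bigr => i _;
    rewrite trmx_mul mulmxA.
apply: fin => y Ky.
pose x := (y *m B)%R.
have Kx : (K *m x^T = 0)%R by rewrite /x trmx_mul mulmxA.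
have : (x <= K)%MS.
  apply: submx_trans (submxMl y B) _.
  by move/andP: KB => [].
case/submxP => z xE.
have : (x *m x^T = 0)%R.
  by rewrite {1}xE -mulmxA Kx mulmx0.
move/sumsq_eq0 => x0.
by rewrite -[y]mulmx1 -BB mulmxA -/x x0 mul0mx.
Qed.
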